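(* Let $p,q\ge 3$ be relatively prime odd integers. Then $$p\sum_{n=1}^{q-1}\frac{\cot(\pi np/q)\cot(\pi n/q)}{\cos^2(\pi n/q)}+q\sum_{n=1}^{p-1}\frac{\cot(\pi nq/p)\cot(\pi n/p)}{\cos^2(\pi n/p)}=\frac{1}{3}\left(p^2+q^2-2\right).$$ *)

(* Defs.v *)
From Stdlib Require Import Reals Lra Lia ZArith Znumtheory.
Open Scope R_scope.

Definition cot (x : R) : R := cos x / sin x.

Fixpoint sum_upto (f : nat -> R) (N : nat) : R :=
  match N with
  | O => 0
  | S k => sum_upto f k + f N
  end.
(* sum_upto f N = f 1 + ... + f N *)

(* Main.v *)
Require Import Defs.
From Stdlib Require Import Reals ZArith Znumtheory.
From Stdlib Require Import Lra Lia.
From Coquelicot Require Import Complex.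
Open Scope R_scope.

Definition ex (t:R) : C := (cos t, sin t).

Lemma ex_add a b : (ex a * ex b)%C = ex (a+b).
Proof. unfold ex, Cmult; simpl. rewrite cos_plus, sin_plus. f_equal; ring. Qed.

Lemma ex_0 : ex 0 = RtoC 1.
Proof. unfold ex, RtoC. rewrite cos_0, sin_0. reflexivity. Qed.

Lemma ex_pow t n : (ex t ^ n)%C = ex (INR n * t).
Proof.
  induction n.
  - simpl. rewrite Rmult_0_l, ex_0. reflexivity.
  - simpl Cpow. rewrite IHn, ex_add. f_equal. rewrite S_INR. ring.
Qed.

Lemma ex_neq0 t : ex t <> RtoC 0.
Proof.
  unfold ex, RtoC. intro H. injection H as H1 H2.
  pose proof (sin2_cos2 t). rewrite H1, H2 in H. unfold Rsqr in H. lra.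
Qed.

Lemma ex_inv t : (/ ex t)%C = ex (-t).
Proof.
  assert (H : (ex t * ex (-t))%C = RtoC 1) by (rewrite ex_add, Rplus_opp_r; apply ex_0).
  pose proof (ex_neq0 t).
  rewrite <- (Cmult_1_l (/ ex t)%C). rewrite <- H. field. auto.
Qed.

Lemma ex_one t : ex t = RtoC 1 -> exists k:Z, t = 2*PI*IZR k.
Proof.
  unfold ex, RtoC. intro H. injection H as H1 H2.
  assert (Hc : cos t = 1 - 2 * sin (t/2) ^ 2).
  { replace t with (2*(t/2)) at 1 by field. rewrite cos_2a_sin. ring. }
  assert (Hs : sin (t/2) = 0) by nra.
  destruct (sin_eq_0_0 _ Hs) as [k Hk]. exists k. lra.
Qed.

Lemma ex_2k (k:Z) : ex (2*PI*IZR k) = RtoC 1.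
Proof.
  unfold ex, RtoC.
  assert (Hs : sin (IZR k * PI) = 0) by (apply sin_eq_0_1; eauto).
  replace (2*PI*IZR k) with (2*(IZR k * PI)) by ring.
  rewrite cos_2a_sin, sin_2a, Hs. f_equal; ring.
Qed.

Lemma ex_div (N:nat) (a:Z) : (0 < N)%nat -> ex (2*PI*IZR a / INR N) = RtoC 1 -> (Z.of_nat N | a)%Z.
Proof.
  intros HN H. destruct (ex_one _ H) as [k Hk].
  exists k.
  assert (HN' : INR N <> 0) by (apply not_0_INR; lia).
  assert (IZR a = IZR k * INR N).
  { pose proof PI_RGT_0.
    apply Rmult_eq_reg_l with (2*PI / INR N). 2: { apply Rmult_integral_contrapositive_currified; [lra| apply Rinv_neq_0_compat; auto]. }
    replace (2 * PI / INR N * IZR a) with (2*PI*IZR a / INR N) by (field; auto).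
    rewrite Hk. field; auto. }
  rewrite INR_IZR_INZ in H0. rewrite <- mult_IZR in H0. apply eq_IZR in H0. exact H0.
Qed.
Open Scope C_scope.

Fixpoint cs (f : nat -> C) (N : nat) : C :=
  match N with O => RtoC 0 | S k => cs f k + f k end.

Lemma cs_ext f g N : (forall k, (k < N)%nat -> f k = g k) -> cs f N = cs g N.
Proof. induction N; intro H; simpl; auto. rewrite IHN by (intros; apply H; lia). rewrite H by lia. auto. Qed.

Lemma cs_plus f g N : cs (fun k => f k + g k) N = cs f N + cs g N.
Proof. induction N; simpl. ring. rewrite IHN. ring. Qed.

Lemma cs_minus f g N : cs (fun k => f k - g k) N = cs f N - cs g N.
Proof. induction N; simpl. ring. rewrite IHN. ring. Qed.

Lemma cs_scal c f N : cs (fun k => c * f k) N = c * cs f N.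
Proof. induction N; simpl. ring. rewrite IHN. ring. Qed.

Lemma cs_zero N : cs (fun _ => RtoC 0) N = RtoC 0.
Proof. induction N; simpl. auto. rewrite IHN. ring. Qed.

Lemma cs_const c N : cs (fun _ => c) N = RtoC (INR N) * c.
Proof. induction N; simpl cs. simpl. ring. rewrite IHN, S_INR, RtoC_plus. ring. Qed.

Lemma cs_swap (f : nat -> nat -> C) N M :
  cs (fun i => cs (fun j => f i j) M) N = cs (fun j => cs (fun i => f i j) N) M.
Proof.
  induction N; simpl.
  - rewrite cs_zero. auto.
  - rewrite IHN. rewrite <- cs_plus. auto.
Qed.

Lemma cs_shift f N : cs f (S N) = f O + cs (fun k => f (S k)) N.
Proof. induction N. simpl. ring. change (cs f (S (S N))) with (cs f (S N) + f (S N)).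
  rewrite IHN. simpl. ring. Qed.

Lemma cs_rev f N : cs (fun k => f (N - 1 - k)%nat) N = cs f N.
Proof.
  induction N. auto.
  rewrite cs_shift. simpl cs at 2.
  replace (S N - 1 - 0)%nat with N by lia.
  rewrite <- IHN. rewrite (cs_ext _ (fun k => f (N - 1 - k)%nat)).
  ring. intros; f_equal; lia.
Qed.

Lemma geo r N : (r - 1) * cs (fun m => r ^ m) N = r ^ N - 1.
Proof. induction N; simpl. ring. rewrite Cmult_plus_distr_l, IHN. ring. Qed.

Lemma geo0 r N : r ^ N = RtoC 1 -> r <> RtoC 1 -> cs (fun m => r ^ m) N = RtoC 0.
Proof.
  intros H1 H2. pose proof (geo r N) as G. rewrite H1 in G.
  replace (RtoC 1 - RtoC 1) with (RtoC 0) in G by ring.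
  assert (r - 1 <> RtoC 0) by (apply Cminus_eq_contra; auto).
  rewrite <- (Cmult_1_l (cs _ N)). rewrite <- (Cinv_l (r - 1)) by auto.
  rewrite <- Cmult_assoc, G. ring.
Qed.

Definition zz (N j : nat) : C := ex (2*PI*INR j / INR N).


Lemma zz_pow N j m : zz N j ^ m = zz N (j * m).
Proof. unfold zz. rewrite ex_pow, mult_INR. f_equal. unfold Rdiv. ring. Qed.

Lemma zz_comm N j m : zz N j ^ m = zz N m ^ j.
Proof. rewrite !zz_pow. f_equal. lia. Qed.

Lemma zz_N N j : (0 < N)%nat -> zz N j ^ N = RtoC 1.
Proof.
  intro HN. unfold zz. rewrite ex_pow.
  assert (INR N <> 0) by (apply not_0_INR; lia).
  replace (INR N * (2 * PI * INR j / INR N))%R with (2*PI*IZR (Z.of_nat j))%R.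
  apply ex_2k. rewrite <- INR_IZR_INZ. field. auto.
Qed.

Lemma zz_ne1 N j : (0 < N)%nat -> (forall k, j <> k * N)%nat -> zz N j <> RtoC 1.
Proof.
  intros HN Hj H. unfold zz in H. rewrite INR_IZR_INZ in H.
  apply ex_div in H; auto. destruct H as [k Hk].
  destruct (Z_le_gt_dec 0 k).
  - apply (Hj (Z.to_nat k)). apply Nat2Z.inj. rewrite Nat2Z.inj_mul, Z2Nat.id; auto.
  - nia.
Qed.

Lemma zz_1 N : (0 < N)%nat -> zz N N = RtoC 1.
Proof.
  intro HN. unfold zz. replace (2 * PI * INR N / INR N)%R with (2*PI*IZR 1)%R. apply ex_2k.
  assert (INR N <> 0) by (apply not_0_INR; lia). simpl. field. auto.
Qed.

Fixpoint rs (f : nat -> R) (N : nat) : R :=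
  match N with O => 0%R | S k => (rs f k + f k)%R end.

Lemma cs_RtoC f N : cs (fun k => RtoC (f k)) N = RtoC (rs f N).
Proof. induction N; simpl. auto. rewrite IHN, RtoC_plus. auto. Qed.

Lemma rs_ext f g N : (forall k, (k < N)%nat -> f k = g k) -> rs f N = rs g N.
Proof. induction N; intro H; simpl; auto. rewrite IHN by (intros; apply H; lia). rewrite H by lia. auto. Qed.

Lemma rs_lin a b N : rs (fun k => a * INR k + b * INR k ^ 2)%R N
   = (a * (INR N * (INR N - 1) / 2) + b * ((INR N - 1) * INR N * (2 * INR N - 1) / 6))%R.
Proof. induction N. simpl. field. cbn [rs]. rewrite IHN, S_INR. field. Qed.

Lemma polyU Z N : (Z - 1) * cs (fun k => INR k * Z ^ k) N = INR N * Z ^ N - cs (fun k => Z ^ k) (S N) + 1.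
Proof. induction N; simpl cs. simpl. ring. rewrite Cmult_plus_distr_l, IHN, S_INR, RtoC_plus. simpl. ring. Qed.

Lemma polyV Z N : (Z - 1) * cs (fun k => INR k ^ 2 * Z ^ k) N
  = RtoC ((INR N - 1)^2) * Z ^ N + cs (fun k => (1 - 2 * INR k) * Z ^ k) N - 1.
Proof. induction N. cbn [cs]. rewrite ?RtoC_pow, ?RtoC_minus. simpl. ring.
  cbn [cs]. rewrite Cmult_plus_distr_l, IHN, S_INR.
  rewrite !RtoC_pow, !RtoC_minus, !RtoC_plus. simpl. ring. Qed.

Definition ck (N k : nat) : R := ((INR N - 2) * INR k - INR k ^ 2)%R.

Lemma point_R (N : nat) (Z : C) : (0 < N)%nat -> Z ^ N = RtoC 1 -> Z <> RtoC 1 ->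
  Z / (Z - 1) ^ 2 = / (2 * INR N) * cs (fun k => RtoC (ck N k) * Z ^ (S k)) N.
Proof.
  intros HN HZ H1.
  assert (G : cs (fun k => Z ^ k) N = RtoC 0) by (apply geo0; auto).
  set (u := cs (fun k => INR k * Z ^ k) N).
  set (V := cs (fun k => INR k ^ 2 * Z ^ k) N).
  assert (Hu : (Z - 1) * u = INR N).
  { unfold u. rewrite polyU. cbn [cs]. rewrite G, HZ. ring. }
  assert (HV : (Z - 1) * V = RtoC ((INR N - 1) ^ 2) - 2 * u - 1).
  { unfold V. rewrite polyV, HZ.
    rewrite (cs_ext _ (fun k => Z ^ k - 2 * (INR k * Z ^ k))) by (intros; ring).
    rewrite cs_minus, cs_scal. change (cs (Cpow Z) N) with (cs (fun k => Z ^ k) N). rewrite G. fold u. ring. }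
  assert (HS : cs (fun k => RtoC (ck N k) * Z ^ (S k)) N = Z * ((INR N - 2) * u - V)).
  { rewrite (cs_ext _ (fun k => Z * ((INR N - 2) * (INR k * Z ^ k) - INR k ^ 2 * Z ^ k))).
    2:{ intros. unfold ck. rewrite RtoC_minus, !RtoC_mult, RtoC_minus, RtoC_pow. simpl Cpow. ring. }
    rewrite cs_scal, cs_minus, cs_scal. auto. }
  rewrite HS.
  assert (Hd : Z - 1 <> RtoC 0) by (apply Cminus_eq_contra; auto).
  assert (HN' : RtoC (INR N) <> RtoC 0).
  { intro E. apply RtoC_inj in E. revert E. apply not_0_INR. lia. }
  assert (E : (Z - 1) ^ 2 * ((INR N - 2) * u - V) = 2 * INR N).
  { transitivity ((INR N - 2) * (Z - 1) * ((Z - 1) * u) - (Z - 1) * ((Z - 1) * V)).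
    simpl. ring. rewrite HV, Hu. rewrite RtoC_pow, RtoC_minus.
    transitivity (2 * ((Z-1) * u) + (Z-1) * ((INR N - 2) * INR N - (INR N - 1)^2 + 1)). ring.
    rewrite Hu. ring. }
  assert (Hd2 : (Z - 1) ^ 2 <> RtoC 0) by (apply Cpow_nz; auto).
  clearbody u V.
  assert (X : (INR N - 2) * u - V = 2 * INR N / (Z - 1) ^ 2) by (rewrite <- E; field; auto).
  rewrite X. field. split; auto.
Qed.

Lemma pow_shift_sum r M : cs (fun n => r ^ (S n)) M = cs (fun n => r ^ n) (S M) - 1.
Proof. rewrite cs_shift. simpl Cpow at 2. ring. Qed.

Lemma Rsum_gen N : (1 < N)%nat ->
  cs (fun n => zz N (S n) / (zz N (S n) - 1) ^ 2) (N - 1) = RtoC (- (INR N ^ 2 - 1) / 12).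
Proof.
  intro HN. destruct N as [|M]. lia. replace (S M - 1)%nat with M by lia.
  assert (HN0 : (0 < S M)%nat) by lia.
  rewrite (cs_ext _ (fun n => / (2 * INR (S M)) * cs (fun k => RtoC (ck (S M) k) * zz (S M) (S n) ^ (S k)) (S M))).
  2:{ intros n Hn. apply point_R; auto. apply zz_N; auto. apply zz_ne1; auto. intros k Hk. destruct k; simpl in Hk; lia. }
  rewrite cs_scal, cs_swap.
  rewrite (cs_ext _ (fun k => RtoC (ck (S M) k * (if (k <? M)%nat then -1 else INR M)))).
  2:{ intros k Hk. rewrite cs_scal.
      rewrite (cs_ext _ (fun n => zz (S M) (S k) ^ (S n))) by (intros; apply zz_comm).
      rewrite pow_shift_sum. rewrite RtoC_mult. f_equal.
      destruct (Nat.ltb_spec k M).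
      - rewrite geo0. ring. apply zz_N; auto. apply zz_ne1; auto. intros j Hj. destruct j; simpl in Hj; lia.
      - assert (k = M) by lia. subst k. rewrite zz_1 by auto.
        rewrite (cs_ext _ (fun _ => RtoC 1)) by (intros; apply Cpow_1_l).
        rewrite cs_const, S_INR, RtoC_plus. ring. }
  rewrite cs_RtoC. cbn [rs].
  rewrite (rs_ext _ (fun k => (- (INR (S M) - 2)) * INR k + 1 * INR k ^ 2)%R).
  2:{ intros k Hk. destruct (Nat.ltb_spec k M); [|lia]. unfold ck. ring. }
  rewrite rs_lin. 
  destruct (Nat.ltb_spec M M); [lia|].
  assert (INR (S M) <> 0) by (apply not_0_INR; lia).
  rewrite <- RtoC_mult, <- RtoC_inv.
  2:{ intro E. lra. }
  rewrite <- RtoC_mult. f_equal. unfold ck. rewrite S_INR in *. field. lra.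
Qed.

Lemma Cpow_mul a b n : (a * b) ^ n = a ^ n * b ^ n.
Proof. induction n; simpl. ring. rewrite IHn. ring. Qed.

Lemma zz_neq0 N j : zz N j <> RtoC 0.
Proof. apply ex_neq0. Qed.

Lemma inv_sum p m : (0 < p)%nat ->
  cs (fun j => (/ zz p j) ^ m) p = if (m =? 0)%nat then RtoC (INR p) else
     (if (m <? p)%nat then RtoC 0 else cs (fun j => (/ zz p j) ^ m) p).
Proof.
  intro Hp.
  destruct (Nat.eqb_spec m 0).
  - subst. simpl. rewrite cs_const. ring.
  - destruct (Nat.ltb_spec m p); auto.
    rewrite (cs_ext _ (fun j => (/ zz p m) ^ j)).
    2:{ intros j Hj. rewrite !Cpow_inv by apply zz_neq0. rewrite zz_comm. auto. }
    apply geo0.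
    + rewrite Cpow_inv by apply zz_neq0. rewrite zz_N by auto. field. 
    + intro E. assert (E2 : zz p m = RtoC 1).
      { rewrite <- (Cinv_l (zz p m)) by apply zz_neq0. rewrite E. ring. }
      revert E2. apply zz_ne1; auto. intros k Hk. destruct k; simpl in Hk; lia.
Qed.

Lemma P1 (p : nat) (x : C) : (0 < p)%nat -> x ^ p <> RtoC 1 ->
  (x ^ p + 1) / (x ^ p - 1) = / INR p * cs (fun j => (x + zz p j) / (x - zz p j)) p.
Proof.
  intros Hp Hx.
  assert (Hx1 : x ^ p - 1 <> RtoC 0) by (apply Cminus_eq_contra; auto).
  assert (Hpt : forall j, (j < p)%nat ->
     zz p j / (x - zz p j) = / (x ^ p - 1) * cs (fun m => x ^ m * (/ zz p j) ^ m) p).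
  { intros j Hj. set (e := zz p j).
    assert (He : e <> RtoC 0) by apply zz_neq0.
    assert (Hep : e ^ p = RtoC 1) by (apply zz_N; auto).
    assert (Hxe : x - e <> RtoC 0).
    { apply Cminus_eq_contra. intro E. apply Hx. rewrite E. auto. }
    pose proof (geo (x * / e) p) as G.
    rewrite Cpow_mul, Cpow_inv, Hep in G by auto.
    rewrite (cs_ext _ (fun m => (x * / e) ^ m)) by (intros; rewrite Cpow_mul; auto).
    assert (Hr : x * / e - 1 <> RtoC 0).
    { intro E. apply Hxe. replace (x - e) with (e * (x * / e - 1)) by (field; auto). rewrite E. ring. }
    apply (f_equal (fun w => w / ((x * / e - 1) * (x ^ p - 1)))) in G.
    replace (cs (fun m : nat => (x * / e) ^ m) p) with ((x ^ p * / 1 - 1) / ((x * / e - 1) * (x ^ p - 1)) * (x ^ p - 1)).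
    2:{ rewrite <- G. field. auto. }
    field. repeat split; auto. }
  rewrite (cs_ext _ (fun j => 1 + 2 * (/ (x ^ p - 1) * cs (fun m => x ^ m * (/ zz p j) ^ m) p))).
  2:{ intros j Hj. rewrite <- Hpt by auto. field.
      apply Cminus_eq_contra. intro E. apply Hx. rewrite E. apply zz_N; auto. }
  rewrite cs_plus, cs_const, cs_scal, cs_scal, cs_swap.
  rewrite (cs_ext (fun m => cs _ p) (fun m => x ^ m * cs (fun j => (/ zz p j) ^ m) p)).
  2:{ intros. rewrite <- cs_scal. auto. }
  destruct p as [|p']. lia.
  rewrite cs_shift.
  rewrite (cs_ext (fun k => _ ^ (S k) * _) (fun _ => RtoC 0)).
  2:{ intros k Hk. rewrite inv_sum by lia. simpl Nat.eqb. destruct (Nat.ltb_spec (S k) (S p')); [ring|lia]. }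
  rewrite cs_zero. rewrite inv_sum by lia. simpl Nat.eqb.
  assert (INR (S p') <> 0%R) by (apply not_0_INR; lia).
  assert (RtoC (INR (S p')) <> RtoC 0) by (intro E; apply RtoC_inj in E; auto).
  cbv iota. field. split; auto.
Qed.

Lemma div_contra N p j (t : Z) : (0 < j < N)%nat -> Nat.gcd N p = 1%nat ->
  (Z.of_nat j * Z.of_nat p = Z.of_nat N * t)%Z -> False.
Proof.
  intros Hj Hg E.
  assert (Ht : (0 <= t)%Z) by nia.
  assert (E2 : (j * p = N * Z.to_nat t)%nat).
  { apply Nat2Z.inj. rewrite !Nat2Z.inj_mul, Z2Nat.id; auto. }
  assert (D : Nat.divide N (j * p)) by (exists (Z.to_nat t); lia).
  rewrite Nat.mul_comm in D. apply Nat.gauss in D; auto.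
  destruct D as [c Hc]. destruct c; simpl in Hc; lia.
Qed.

Lemma nz_pow N p j : (0 < j < N)%nat -> Nat.gcd N p = 1%nat -> zz N j ^ p <> RtoC 1.
Proof.
  intros Hj Hg E. rewrite zz_pow in E. unfold zz in E. rewrite INR_IZR_INZ in E.
  apply ex_div in E; [|lia]. destruct E as [k Hk].
  apply (div_contra N p j k); auto. rewrite Nat2Z.inj_mul in Hk. lia.
Qed.

Lemma gcd1 n : Nat.gcd n 1 = 1%nat.
Proof. apply Nat.divide_1_r, Nat.gcd_divide_r. Qed.

Lemma nz_1 N j : (0 < j < N)%nat -> zz N j <> RtoC 1.
Proof. intros Hj E. apply (nz_pow N 1 j Hj). apply gcd1. simpl. rewrite E. ring. Qed.

Lemma nz_sq N j : (0 < j < N)%nat -> Nat.odd N = true -> zz N j ^ 2 <> RtoC 1.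
Proof.
  intros Hj Ho. apply nz_pow; auto.
  apply Nat.odd_spec in Ho. destruct Ho as [t Ht]. subst N.
  rewrite Nat.gcd_comm. replace (2 * t + 1)%nat with (1 + t * 2)%nat by lia.
  rewrite Nat.gcd_add_mult_diag_r. apply gcd1.
Qed.

Lemma ex_sub a b : ex a * / ex b = ex (a - b).
Proof. rewrite ex_inv, ex_add. f_equal. Qed.

Lemma nz_ne N p j m : (0 < j < N)%nat -> (0 < p)%nat -> Nat.gcd N p = 1%nat -> zz N j <> zz p m.
Proof.
  intros Hj Hp Hg E.
  assert (E1 : zz N j * / zz p m = RtoC 1) by (rewrite E; field; apply zz_neq0).
  unfold zz in E1. rewrite ex_sub in E1. apply ex_one in E1. destruct E1 as [k Hk].
  assert (HN : INR N <> 0%R) by (apply not_0_INR; lia).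
  assert (HP : INR p <> 0%R) by (apply not_0_INR; lia).
  assert (R1 : (INR j * INR p = INR N * (INR m + IZR k * INR p))%R).
  { pose proof PI_RGT_0.
    apply Rmult_eq_reg_l with (2 * PI / (INR N * INR p))%R.
    2:{ apply Rmult_integral_contrapositive_currified; [lra|]. apply Rinv_neq_0_compat.
        apply Rmult_integral_contrapositive_currified; auto. }
    transitivity (2 * PI * INR j / INR N)%R. field; auto.
    replace (2 * PI * INR j / INR N)%R with (2 * PI * INR m / INR p + 2 * PI * IZR k)%R by lra.
    field; auto. }
  rewrite !INR_IZR_INZ in R1. rewrite <- !mult_IZR, <- plus_IZR, <- mult_IZR in R1.
  apply eq_IZR in R1. apply (div_contra N p j (Z.of_nat m + k * Z.of_nat p)); auto.
Qed.

Definition Bf (x : C) : C := x / (x ^ 2 - 1).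

Lemma zz_refl N j : (0 < N)%nat -> (j <= N)%nat -> zz N (N - j) = / zz N j.
Proof.
  intros HN Hj. unfold zz. rewrite ex_inv. rewrite minus_INR by auto.
  assert (INR N <> 0%R) by (apply not_0_INR; lia).
  replace (2 * PI * (INR N - INR j) / INR N)%R with (2 * PI * IZR 1 + - (2 * PI * INR j / INR N))%R.
  rewrite <- ex_add, ex_2k. ring. simpl. field. auto.
Qed.

Lemma Bsum N : (1 < N)%nat -> Nat.odd N = true -> cs (fun n => Bf (zz N (S n))) (N - 1) = RtoC 0.
Proof.
  intros HN Ho.
  set (T := cs (fun n => Bf (zz N (S n))) (N - 1)).
  assert (E : T = -1 * T).
  { unfold T at 1. rewrite <- cs_rev. unfold T. rewrite <- cs_scal. apply cs_ext.
    intros k Hk. clearbody T. replace (S (N - 1 - 1 - k)) with (N - S k)%nat by lia.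
    rewrite zz_refl by lia. unfold Bf.
    assert (H1 := nz_sq N (S k) ltac:(lia) Ho).
    assert (H0 := zz_neq0 N (S k)).
    assert (H2 : zz N (S k) ^ 2 - 1 <> RtoC 0) by (apply Cminus_eq_contra; auto).
    assert (H3 : 1 - zz N (S k) ^ 2 <> RtoC 0) by (apply Cminus_eq_contra; auto).
    rewrite Cpow_inv by auto.
    replace (/ zz N (S k) ^ 2 - 1) with ((1 - zz N (S k) ^ 2) / zz N (S k) ^ 2).
    2:{ field. repeat split; try apply Cpow_nz; auto. }
    field. repeat split; try apply Cpow_nz; auto. }
  clearbody T. replace T with ((T - (-1 * T)) / 2). rewrite <- E. field.
  field.
Qed.

Definition Gf (p : nat) (x : C) : C := x * (x ^ p + 1) / ((x ^ p - 1) * (x ^ 2 - 1)).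
Definition Hf (x y : C) : C := x * (x + y) / ((x - y) * (x ^ 2 - 1)).
Definition Af (x : C) : C := (x ^ 2 + 1) / (x ^ 2 - 1).

Lemma cs_scal_r c f N : cs (fun k => f k * c) N = cs f N * c.
Proof. rewrite (cs_ext _ (fun k => c * f k)) by (intros; ring). rewrite cs_scal. ring. Qed.

Lemma cs_prod a b N M : cs (fun n => cs (fun m => a n * b m) M) N = cs a N * cs b M.
Proof.
  rewrite (cs_ext _ (fun n => a n * cs b M)) by (intros; apply cs_scal).
  apply cs_scal_r.
Qed.

Lemma zz_0 N : zz N 0 = RtoC 1.
Proof. unfold zz. simpl INR. replace (2 * PI * 0 / INR N)%R with 0%R. apply ex_0. unfold Rdiv. ring. Qed.

Lemma stepA p q n : (1 < p)%nat -> (1 < q)%nat -> Nat.odd q = true -> Nat.gcd q p = 1%nat -> (0 < n < q)%nat ->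
  INR p * Gf p (zz q n) = zz q n / (zz q n - 1) ^ 2 + cs (fun m => Hf (zz q n) (zz p (S m))) (p - 1).
Proof.
  intros Hp Hq Ho Hg Hn.
  set (x := zz q n).
  assert (Hx1 : x <> RtoC 1) by (apply nz_1; auto).
  assert (Hx2 : x ^ 2 <> RtoC 1) by (apply nz_sq; auto).
  assert (Hxp : x ^ p <> RtoC 1) by (apply nz_pow; auto).
  assert (Hxe : forall j, x - zz p j <> RtoC 0).
  { intro j. apply Cminus_eq_contra. apply nz_ne; auto; lia. }
  assert (Hd2 : x ^ 2 - 1 <> RtoC 0) by (apply Cminus_eq_contra; auto).
  assert (Hdp : x ^ p - 1 <> RtoC 0) by (apply Cminus_eq_contra; auto).
  assert (Hd1 : x - 1 <> RtoC 0) by (apply Cminus_eq_contra; auto).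
  assert (HP : RtoC (INR p) <> RtoC 0).
  { intro E. apply RtoC_inj in E. revert E. apply not_0_INR. lia. }
  clearbody x.
  assert (E1 : INR p * Gf p x = Bf x * (INR p * ((x ^ p + 1) / (x ^ p - 1)))).
  { unfold Gf, Bf. field. auto. }
  rewrite E1, P1 by (auto; lia).
  replace (Bf x * (INR p * (/ INR p * cs (fun j => (x + zz p j) / (x - zz p j)) p)))
    with (cs (fun j => Hf x (zz p j)) p).
  2:{ rewrite <- !cs_scal. apply cs_ext. intros j Hj.
      unfold Hf, Bf. field. auto. }
  destruct p as [|p']. lia. rewrite cs_shift. replace (S p' - 1)%nat with p' by lia.
  f_equal. rewrite zz_0. unfold Hf. field. split; auto.
Qed.

Lemma pairHf x y : x <> y -> x ^ 2 <> RtoC 1 -> y ^ 2 <> RtoC 1 ->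
  Hf x y + Hf y x = -1 * (Af x * Bf y) + -1 * (Bf x * Af y).
Proof.
  intros H1 H2 H3. unfold Hf, Af, Bf.
  assert (x - y <> RtoC 0) by (apply Cminus_eq_contra; auto).
  assert (y - x <> RtoC 0) by (apply Cminus_eq_contra; auto).
  assert (x^2 - 1 <> RtoC 0) by (apply Cminus_eq_contra; auto).
  assert (y^2 - 1 <> RtoC 0) by (apply Cminus_eq_contra; auto).
  field. auto.
Qed.

Definition Rq (q : nat) : C := cs (fun n => zz q (S n) / (zz q (S n) - 1) ^ 2) (q - 1).

Lemma main_C p q : (1 < p)%nat -> (1 < q)%nat -> Nat.odd p = true -> Nat.odd q = true ->
  Nat.gcd p q = 1%nat ->
  INR p * cs (fun n => Gf p (zz q (S n))) (q - 1) + INR q * cs (fun m => Gf q (zz p (S m))) (p - 1)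
  = Rq q + Rq p.
Proof.
  intros Hp Hq Hop Hoq Hg.
  assert (Hg' : Nat.gcd q p = 1%nat) by (rewrite Nat.gcd_comm; auto).
  rewrite <- !cs_scal.
  rewrite (cs_ext (fun n => INR p * Gf p (zz q (S n)))
     (fun n => zz q (S n) / (zz q (S n) - 1) ^ 2 + cs (fun m => Hf (zz q (S n)) (zz p (S m))) (p - 1)))
    by (intros; apply stepA; auto; lia).
  rewrite (cs_ext (fun n => INR q * Gf q (zz p (S n)))
     (fun n => zz p (S n) / (zz p (S n) - 1) ^ 2 + cs (fun m => Hf (zz p (S n)) (zz q (S m))) (q - 1)))
    by (intros; apply stepA; auto; lia).
  rewrite !cs_plus. unfold Rq.
  rewrite (cs_swap (fun n m => Hf (zz p (S n)) (zz q (S m)))).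
  set (A := cs (fun k : nat => zz q (S k) / (zz q (S k) - 1) ^ 2) (q - 1)).
  set (B := cs (fun k : nat => zz p (S k) / (zz p (S k) - 1) ^ 2) (p - 1)).
  set (D1 := cs (fun k : nat => cs (fun m : nat => Hf (zz q (S k)) (zz p (S m))) (p - 1)) (q - 1)).
  set (D2 := cs (fun j : nat => cs (fun i : nat => Hf (zz p (S i)) (zz q (S j))) (p - 1)) (q - 1)).
  assert (HD : D1 + D2 = RtoC 0).
  { unfold D1, D2. rewrite <- cs_plus.
    rewrite (cs_ext _ (fun n => cs (fun m => -1 * (Af (zz q (S n)) * Bf (zz p (S m))) + -1 * (Bf (zz q (S n)) * Af (zz p (S m)))) (p - 1))).
    2:{ intros n Hn. rewrite <- cs_plus. apply cs_ext. intros m Hm. apply pairHf.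
        apply nz_ne; auto; lia. apply nz_sq; auto; lia. apply nz_sq; auto; lia. }
    rewrite (cs_ext _ (fun n => cs (fun m => -1 * (Af (zz q (S n)) * Bf (zz p (S m)))) (p - 1) + cs (fun m => -1 * (Bf (zz q (S n)) * Af (zz p (S m)))) (p-1)))
      by (intros; apply cs_plus).
    rewrite cs_plus. rewrite !(cs_ext (fun n => cs (fun m => -1 * _) _) (fun n => -1 * cs _ (p - 1))) by (intros; apply cs_scal).
    rewrite !cs_scal, !cs_prod. rewrite !Bsum by auto. ring. }
  clearbody A B D1 D2. transitivity (A + B + (D1 + D2)). ring. rewrite HD. ring.
Qed.

Lemma Ci_sq : Ci * Ci = RtoC (-1).
Proof. unfold Ci, Cmult, RtoC. simpl. f_equal; ring. Qed.

Lemma ex_p1 a : ex (2 * a) + 1 = RtoC (2 * cos a) * ex a.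
Proof. unfold ex, RtoC, Cplus, Cmult. simpl. rewrite cos_2a_cos, sin_2a. f_equal; ring. Qed.

Lemma ex_m1 a : ex (2 * a) - 1 = RtoC (2 * sin a) * Ci * ex a.
Proof. unfold ex, RtoC, Cminus, Cplus, Copp, Cmult, Ci. simpl. rewrite cos_2a_sin, sin_2a. f_equal; ring. Qed.


Lemma den_aux (s r : R) (u v : C) : RtoC (2 * s) * Ci * u * (RtoC (2 * r) * Ci * v) = RtoC (-4) * RtoC s * RtoC r * u * v.
Proof.
  transitivity (RtoC 2 * RtoC s * RtoC 2 * RtoC r * (Ci * Ci) * u * v).
  rewrite !RtoC_mult. ring. rewrite Ci_sq. rewrite <- !RtoC_mult.
  replace (2 * s * 2 * r * -1)%R with (-4 * s * r)%R by ring. rewrite !RtoC_mult. ring.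
Qed.

Lemma term_eq p q n : (0 < n < q)%nat -> (1 < q)%nat -> Nat.odd q = true -> Nat.gcd q p = 1%nat ->
  RtoC (cot (PI * INR n * INR p / INR q) * cot (PI * INR n / INR q) / (cos (PI * INR n / INR q)) ^ 2)
  = -4 * Gf p (zz q n).
Proof.
  intros Hn Hq Ho Hg.
  set (a := (PI * INR n * INR p / INR q)%R). set (t := (PI * INR n / INR q)%R).
  assert (Hx : zz q n = ex (2 * t)) by (unfold zz, t; f_equal; unfold Rdiv; ring).
  assert (Hy : zz q n ^ p = ex (2 * a)) by (rewrite Hx, ex_pow; f_equal; unfold a, t, Rdiv; ring).
  assert (Hx2 : zz q n ^ 2 = ex (2 * (2 * t))) by (rewrite Hx, ex_pow; f_equal; simpl; ring).
  assert (N1 := nz_pow q p n Hn Hg). assert (N2 := nz_sq q n Hn Ho).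
  rewrite Hy in N1. rewrite Hx2 in N2.
  assert (Sa : sin a <> 0%R).
  { intro E. apply N1. replace (ex (2 * a)) with ((ex (2 * a) - 1) + 1) by ring. rewrite ex_m1, E. rewrite Rmult_0_r. ring. }
  assert (S2t : sin (2 * t) <> 0%R).
  { intro E. apply N2. replace (ex (2 * (2 * t))) with ((ex (2 * (2 * t)) - 1) + 1) by ring. rewrite ex_m1, E. rewrite Rmult_0_r. ring. }
  assert (St : sin t <> 0%R). { intro E. apply S2t. rewrite sin_2a, E. ring. }
  assert (Ct : cos t <> 0%R). { intro E. apply S2t. rewrite sin_2a, E. ring. }
  assert (LR : (cot a * cot t / cos t ^ 2 = 2 * cos a / (sin a * sin (2 * t)))%R).
  { unfold cot. rewrite sin_2a. field. auto. }
  rewrite LR. unfold Gf. rewrite Hy, Hx2. clearbody a t.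
  rewrite ex_p1, ex_m1, ex_m1. rewrite <- Hx.
  assert (Den : RtoC (2 * sin a) * Ci * ex a * (RtoC (2 * sin (2 * t)) * Ci * zz q n)
     = RtoC (-4) * RtoC (sin a) * RtoC (sin (2 * t)) * ex a * zz q n) by apply den_aux.
  rewrite Den.
  assert (HSa : RtoC (sin a) <> RtoC 0) by (intro E; apply RtoC_inj in E; auto).
  assert (HS2 : RtoC (sin (2 * t)) <> RtoC 0) by (intro E; apply RtoC_inj in E; auto).
  assert (Hea := ex_neq0 a). assert (Hz := zz_neq0 q n).
  rewrite !RtoC_div, !RtoC_mult.
  field. repeat split; auto.
  apply Rmult_integral_contrapositive_currified; auto.
Qed.

Close Scope C_scope.
Open Scope R_scope.
Lemma sum_conv f N : RtoC (sum_upto f N) = cs (fun k => RtoC (f (S k))) N.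
Proof. induction N; simpl sum_upto; cbn [cs]. auto. rewrite RtoC_plus, IHN. auto. Qed.

Theorem mainTheorem17 (p q : nat) :
  (3 <= p)%nat -> (3 <= q)%nat -> Nat.odd p = true -> Nat.odd q = true ->
  Nat.gcd p q = 1%nat ->
  INR p * sum_upto (fun n => cot (PI * INR n * INR p / INR q) * cot (PI * INR n / INR q)
                              / (cos (PI * INR n / INR q)) ^ 2) (q - 1)
  + INR q * sum_upto (fun n => cot (PI * INR n * INR q / INR p) * cot (PI * INR n / INR p)
                              / (cos (PI * INR n / INR p)) ^ 2) (p - 1)
  = / 3 * (INR p ^ 2 + INR q ^ 2 - 2).
Proof.
  intros H3p H3q Hop Hoq Hg.
  assert (Hg' : Nat.gcd q p = 1%nat) by (rewrite Nat.gcd_comm; auto).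
  match goal with |- ?L = ?R => enough (E : RtoC L = RtoC R) by (injection E; auto) end.
  rewrite RtoC_plus, !RtoC_mult, !sum_conv.
  rewrite (cs_ext _ (fun k => -4 * Gf p (zz q (S k)))%C (q - 1)) by (intros; apply term_eq; auto; lia).
  rewrite (cs_ext _ (fun k => -4 * Gf q (zz p (S k)))%C (p - 1)) by (intros; apply term_eq; auto; lia).
  rewrite !cs_scal.
  transitivity (-4 * (INR p * cs (fun n => Gf p (zz q (S n))) (q - 1) + INR q * cs (fun m => Gf q (zz p (S m))) (p - 1)))%C.
  ring.
  rewrite main_C by (auto; lia). unfold Rq. rewrite !Rsum_gen by lia.
  rewrite <- RtoC_plus, <- !RtoC_mult. f_equal. field.
Qed.
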